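(* Let $k,n$ be integers with $1\leq k\leq n$ and let $G$ be a bipartite graph of order $n$. If $e(G)\leq e(K_{k-1,n-k+1})$, then $\rho(G)\leq \rho(K_{k-1,n-k+1})$.
   Context: Graphs are finite and simple; $e(G)$ is the number of edges and $\rho(G)$ the largest eigenvalue of the adjacency matrix of $G$. $K_{a,b}$ is the complete bipartite graph with parts of sizes $a$ and $b$. *)

(* Defs.v *)
From HB Require Import structures.
From mathcomp Require Import all_boot all_order all_algebra.
From mathcomp Require Import reals.
Set Implicit Arguments. Unset Strict Implicit. Unset Printing Implicit Defensive.
Import Order.TTheory GRing.Theory Num.Theory.

Definition simple_graph n (G : rel 'I_n) : Prop :=
  (forall x y, G x y = G y x) /\ (forall x, ~~ G x x).

Definition bipartite n (G : rel 'I_n) : Prop :=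
  exists A : {set 'I_n}, forall x y, G x y -> (x \in A) != (y \in A).

Definition num_edges n (G : rel 'I_n) : nat :=
  #|[set E : {set 'I_n} | [exists x, exists y, G x y && (E == [set x; y])]]|.

Definition adj_mx (R : realType) n (G : rel 'I_n) : 'M[R]_n :=
  \matrix_(i, j) ((G i j)%:R)%R.

Definition largest_eigenvalue (R : realType) n (M : 'M[R]_n) (r : R) : Prop :=
  eigenvalue M r /\ (forall x : R, eigenvalue M x -> x <= r)%R.

Definition Kbip n (a : nat) : rel 'I_n :=
  fun i j => (i < a) != (j < a).
Arguments Kbip : clear implicits.

(* Main.v *)
From HB Require Import structures.
From mathcomp Require Import all_boot all_order all_algebra.
From mathcomp Require Import reals ring lra.
Require Import Defs.
Set Implicit Arguments. Unset Strict Implicit. Unset Printing Implicit Defensive.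
Import Order.TTheory GRing.Theory Num.Theory.
Local Open Scope ring_scope.

Lemma CS (R : realFieldType) (I : finType) (a b : I -> R) :
  (\sum_i a i * b i) ^+ 2 <= (\sum_i a i ^+ 2) * (\sum_i b i ^+ 2).
Proof.
set A := \sum_i a i ^+ 2; set B := \sum_i b i ^+ 2; set S := \sum_i a i * b i.
have A0 : 0 <= A by apply: sumr_ge0 => i _; exact: sqr_ge0.
have [Aeq|Apos] := eqVneq A 0.
  have az : forall i, a i = 0.
    move=> i; apply/eqP; rewrite -sqrf_eq0; apply/eqP.
    by move/psumr_eq0P: Aeq => ->// j _; exact: sqr_ge0.
  rewrite /S (eq_bigr (fun _ => 0)); last by move=> i _; rewrite az mul0r.
  by rewrite big1 // expr0n /= Aeq mul0r.
have Ap : 0 < A by rewrite lt_def Apos A0.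
have key : \sum_i (S * a i - A * b i) ^+ 2 = A * (A * B - S ^+ 2).
  rewrite (eq_bigr (fun i => S ^+ 2 * a i ^+ 2 - (2 * S * A) * (a i * b i) + A ^+ 2 * b i ^+ 2)); last first.
    by move=> i _; ring.
  rewrite big_split /= sumrB -!mulr_sumr -/A -/B -/S; ring.
have : 0 <= A * (A * B - S ^+ 2).
  by rewrite -key; apply: sumr_ge0 => i _; exact: sqr_ge0.
by rewrite pmulr_rge0 // subr_ge0.
Qed.
Lemma side (R : realFieldType) n (G : rel 'I_n) (P : pred 'I_n) (lam : R) (w : 'I_n -> R) :
  (forall i j, G i j -> P j -> ~~ P i) ->
  (forall j, lam * w j = \sum_i w i * (G i j)%:R) ->
  lam ^+ 2 * (\sum_(j | P j) w j ^+ 2) <=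
  (\sum_(j | P j) \sum_i ((G i j)%:R : R)) * (\sum_(i | ~~ P i) w i ^+ 2).
Proof.
move=> hP heig.
rewrite mulr_sumr mulr_suml; apply: ler_sum => j Pj.
rewrite -exprMn heig.
have e1 : \sum_i w i * (G i j)%:R = \sum_i ((G i j)%:R : R) * ((G i j)%:R * w i).
  by apply: eq_bigr => i _; case: (G i j); rewrite ?mulr1n ?mulr0n ?mul1r ?mul0r ?mulr0 ?mulr1.
rewrite e1; apply: le_trans (CS _ _) _.
have e2 : \sum_i ((G i j)%:R : R) ^+ 2 = \sum_i ((G i j)%:R : R).
  by apply: eq_bigr => i _; case: (G i j); rewrite ?mulr1n ?mulr0n ?expr1n ?expr0n.
rewrite e2; apply: ler_wpM2l; first by apply: sumr_ge0 => i _; rewrite ler0n.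
rewrite [X in _ <= X]big_mkcond /=; apply: ler_sum => i _.
case Gij: (G i j); last by rewrite mul0r expr0n /=; case: ifP => _ //; exact: sqr_ge0.
by rewrite (hP _ _ Gij Pj) mul1r.
Qed.
Lemma count_side (R : realFieldType) n (G : rel 'I_n) (P : pred 'I_n) :
  (forall i j, G i j -> P j -> ~~ P i) ->
  (\sum_(j | P j) \sum_i ((G i j)%:R : R)) <= (num_edges G)%:R.
Proof.
move=> hP.
set S := [set p : 'I_n * 'I_n | P p.2 && G p.1 p.2].
have -> : (\sum_(j | P j) \sum_i ((G i j)%:R : R)) = (#|S|)%:R.
  rewrite -sum1_card natr_sum big_mkcond /=.
  rewrite (eq_bigr (fun j => \sum_i (((P j && G i j))%:R : R))); last first.
    by move=> j _; case: (P j) => //; rewrite big1.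
  rewrite exchange_big /=.
  rewrite pair_big /= [RHS]big_mkcond /=; apply: eq_bigr => p _.
  by rewrite /S inE; case: (_ && _).
rewrite ler_nat /num_edges.
set f := fun p : 'I_n * 'I_n => [set p.1; p.2].
rewrite -(card_in_imset (f := f) (D := mem S)).
  apply: subset_leq_card; apply/subsetP => E /imsetP [p pS ->].
  rewrite inE; apply/existsP; exists p.1; apply/existsP; exists p.2.
  by move: pS; rewrite inE => /andP [_ ->] /=.
move=> p q; rewrite !inE => /andP [Pp Gp] /andP [Pq Gq] /= fpq.
have np1 := hP _ _ Gp Pp; have nq1 := hP _ _ Gq Pq.
have hp2 : p.2 \in f q by rewrite -fpq /f !inE eqxx orbT.
have hp1 : p.1 \in f q by rewrite -fpq /f !inE eqxx.
move: hp2 hp1; rewrite /f !inE => /orP [/eqP e|/eqP e2].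
  by move: nq1; rewrite -e Pp.
move=> /orP [/eqP e1|/eqP e].
  by case: p q {Pp Gp Pq Gq fpq np1 nq1} e1 e2 => [? ?] [? ?] /= -> ->.
by move: np1; rewrite e Pq.
Qed.
Lemma K_edges n a0 :
  (num_edges (Kbip n a0) <= #|[set i : 'I_n | (i < a0)%N]| * #|~: [set i : 'I_n | (i < a0)%N]|)%N.
Proof.
set P1 := [set i : 'I_n | (i < a0)%N].
rewrite -cardsX /num_edges.
apply: leq_trans (leq_imset_card (fun p : 'I_n * 'I_n => [set p.1; p.2]) (mem (setX P1 (~: P1)))).
apply: subset_leq_card; apply/subsetP => E; rewrite inE => /existsP [x /existsP [y /andP [Kxy /eqP ->]]].
move: Kxy; rewrite /Kbip.
case xa: (x < a0)%N; case ya: (y < a0)%N => //= _.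
  by apply/imsetP; exists (x, y) => //; rewrite !inE xa ya.
by apply/imsetP; exists (y, x); [rewrite !inE xa ya | rewrite /= setUC].
Qed.

Lemma K_eig (R : realType) n a0 : (a0 < n)%N ->
  eigenvalue (adj_mx R (Kbip n a0)) (Num.sqrt ((#|[set i : 'I_n | (i < a0)%N]| * #|~: [set i : 'I_n | (i < a0)%N]|)%:R)).
Proof.
move=> ha0; have n0 : (0 < n)%N by apply: leq_ltn_trans ha0.
set P1 := [set i : 'I_n | (i < a0)%N].
have inP1 : forall i, (i \in P1) = (i < a0)%N by move=> i; rewrite inE.
set a := #|P1|; set b := #|~: P1|.
have [a0e|apos] := eqVneq a 0%N.
  rewrite a0e mul0n sqrtr0.
  have P1e : forall i : 'I_n, (i < a0)%N = false.
    by move=> i; rewrite -inP1; apply/negbTE; move/eqP: a0e; rewrite cards_eq0 => /eqP ->; rewrite inE.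
  apply/eigenvalueP; exists (const_mx 1).
    apply/rowP => j; rewrite !mxE mul0r big1 // => i _.
    by rewrite /adj_mx !mxE /Kbip !P1e mulr0.
  apply/eqP => /rowP /(_ (Ordinal n0)); rewrite !mxE; apply/eqP; exact: oner_neq0.
have bpos : (0 < b)%N.
  by apply/card_gt0P; exists (Ordinal ha0); rewrite in_setC inP1 /= ltnn.
have [i0 i0P] : exists i, i \in P1 by apply/card_gt0P; rewrite lt0n.
apply/eigenvalueP.
exists (\row_i (if i \in P1 then Num.sqrt (b%:R : R) else Num.sqrt (a%:R : R))).
  apply/rowP => j; rewrite !mxE.
  under eq_bigr => i _ do rewrite !mxE /Kbip -!inP1.
  rewrite natrM sqrtrM ?ler0n //.
  case jP: (j \in P1).
    rewrite (eq_bigr (fun i => if i \in ~: P1 then Num.sqrt (a%:R : R) else 0)); last first.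
      by move=> i _; rewrite in_setC; case: (i \in P1); rewrite /= ?mulr1n ?mulr0n ?mulr0 ?mulr1.
    rewrite -big_mkcond sumr_const -/b /=.
    by rewrite -mulrA -expr2 sqr_sqrtr ?ler0n // mulr_natr.
  rewrite (eq_bigr (fun i => if i \in P1 then Num.sqrt (b%:R : R) else 0)); last first.
    by move=> i _; case: (i \in P1); rewrite /= ?mulr1n ?mulr0n ?mulr0 ?mulr1.
  rewrite -big_mkcond sumr_const -/a /=.
  by rewrite mulrAC -expr2 sqr_sqrtr ?ler0n // mulr_natl.
apply/eqP => /rowP /(_ i0); rewrite !mxE i0P => /eqP; by rewrite sqrtr_eq0 leNgt ltr0n bpos.
Qed.

Theorem proposition5 (R : realType) (n k : nat) (G : rel 'I_n) (rhoG rhoK : R) :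
  (1 <= k <= n)%N ->
  simple_graph G ->
  bipartite G ->
  (num_edges G <= num_edges (Kbip n k.-1))%N ->
  largest_eigenvalue (adj_mx R G) rhoG ->
  largest_eigenvalue (adj_mx R (Kbip n k.-1)) rhoK ->
  (rhoG <= rhoK)%R.
Proof.
move=> /andP [k1 kn] _ [A hA] heG [eigG _] [_ maxK].
have ha0 : (k.-1 < n)%N by apply: leq_trans kn; rewrite prednK.
set P1 := [set i : 'I_n | (i < k.-1)%N].
set s := Num.sqrt ((#|P1| * #|~: P1|)%:R : R).
have sK : s <= rhoK by apply: maxK; exact: K_eig.
have s0 : 0 <= s by exact: sqrtr_ge0.
have [rle0|rpos] := lerP rhoG 0; first by apply: le_trans rle0 (le_trans s0 sK).
apply: le_trans sK.
have es : ((num_edges G)%:R : R) <= s ^+ 2.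
  rewrite sqr_sqrtr ?ler0n // ler_nat; apply: leq_trans heG _; exact: K_edges.
move/eigenvalueP: eigG => [v Hv vnz].
set w := fun i => v 0 i.
have heig : forall j, rhoG * w j = \sum_i w i * (G i j)%:R.
  move=> j; move/rowP: Hv => /(_ j); rewrite !mxE => <-.
  by apply: eq_bigr => i _; rewrite /adj_mx mxE.
have h1 : forall i j, G i j -> j \in A -> ~~ (i \in A).
  by move=> i j /hA; case: (i \in A); case: (j \in A).
have h2 : forall i j, G i j -> j \notin A -> ~~ (i \notin A).
  by move=> i j /hA; case: (i \in A); case: (j \in A).
have S1 := side h1 heig.
have S2 := side h2 heig.
have C1 := count_side R h1.
have C2 := count_side R h2.
set X := \sum_(j | j \in A) w j ^+ 2 in S1 S2.
set Y := \sum_(j | j \notin A) w j ^+ 2 in S1 S2.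
have eY : \sum_(j | ~~ (j \notin A)) w j ^+ 2 = X by apply: eq_bigl => j; rewrite negbK.
rewrite eY in S2.
have X0 : 0 <= X by apply: sumr_ge0 => j _; exact: sqr_ge0.
have Y0 : 0 <= Y by apply: sumr_ge0 => j _; exact: sqr_ge0.
have T : \sum_j w j ^+ 2 = X + Y by rewrite (bigID (fun j => j \in A)).
have Tpos : 0 < X + Y.
  rewrite lt_def addr_ge0 // andbT -T; apply/eqP => /psumr_eq0P H.
  move/eqP: vnz; apply; apply/rowP => i; rewrite mxE.
  apply/eqP; rewrite -sqrf_eq0; apply/eqP; apply: H => // j _; exact: sqr_ge0.
have ineq : rhoG ^+ 2 * (X + Y) <= s ^+ 2 * (X + Y).
  rewrite mulrDr [X in _ <= X]mulrDr [X in _ <= X]addrC; apply: lerD.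
    apply: le_trans S1 _; apply: ler_wpM2r => //; exact: le_trans C1 es.
  apply: le_trans S2 _; apply: ler_wpM2r => //; exact: le_trans C2 es.
rewrite ler_pM2r // in ineq.
by rewrite -(ler_pXn2r (n := 2)) // nnegrE ltW.
Qed.
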